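(* Let $N\ge1$, real $\delta,\varepsilon>0$, and arbitrary real $r_i,c_i,c'_i$ ($1\le i\le N$). For integers $l,m,n$ put $\eta_i(l,m,n)=\max(0,r_i-\delta)l-\max(0,-r_i-\varepsilon)m+r_in+c_i$, $\eta'_i(l,m,n)=\max(0,-r_i-\delta)l-\max(0,r_i-\varepsilon)m-r_in+c'_i$, $\phi_i(l,m,n)=\max(\eta_i(l,m,n),\eta'_i(l,m,n))$ and $\tau(l,m,n)=\max[\phi_i(l,m,n+j-1)]_{1\le i,j\le N}$. Then $\tau$ satisfies the ultradiscrete two-dimensional Toda lattice equation \[ \tau(l,m-1,n)+\tau(l+1,m,n)=\max\bigl(\tau(l,m,n)+\tau(l+1,m-1,n),\ \tau(l,m-1,n+1)+\tau(l+1,m,n-1)-\delta-\varepsilon\bigr) \] for all integers $l,m,n$.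
   Context: Ultradiscrete permanent (UP): for a real $N\times N$ matrix $A=(a_{ij})$, $\max[a_{ij}]_{1\le i,j\le N}\equiv\max_{\pi}\sum_{i=1}^N a_{i\pi(i)}$ over all permutations $\pi$ of $\{1,\dots,N\}$. *)

(* Defs.v *)
From mathcomp Require Import all_boot all_order all_algebra all_fingroup.
Set Implicit Arguments. Unset Strict Implicit. Unset Printing Implicit Defensive.
Import Order.TTheory GRing.Theory Num.Theory.
Local Open Scope ring_scope.

(* Ultradiscrete permanent: max over permutations s of 'S_N of sum_i a i (s i).
   The big max is seeded with the value at the identity permutation (which is
   one of the terms), so the result is exactly the maximum over all perms. *)
Definition upsum (R : realDomainType) (N : nat) (a : 'I_N -> 'I_N -> R)
  (s : 'S_N) : R := \sum_(i < N) a i (s i).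

Definition UP (R : realDomainType) (N : nat) (a : 'I_N -> 'I_N -> R) : R :=
  \big[Num.max/upsum a 1%g]_(s : 'S_N) upsum a s.

Definition eta_ (R : realDomainType) (delta eps ri ci : R) (l m n : int) : R :=
  Num.max 0 (ri - delta) * l%:~R - Num.max 0 (- ri - eps) * m%:~R
  + ri * n%:~R + ci.

Definition eta' (R : realDomainType) (delta eps ri ci' : R) (l m n : int) : R :=
  Num.max 0 (- ri - delta) * l%:~R - Num.max 0 (ri - eps) * m%:~R
  - ri * n%:~R + ci'.

Definition phi (R : realDomainType) (delta eps ri ci ci' : R) (l m n : int) : R :=
  Num.max (eta_ delta eps ri ci l m n) (eta' delta eps ri ci' l m n).

(* tau(l,m,n) = max[phi_i(l,m,n+j-1)]_{1<=i,j<=N}; with 0-based j this is n + j *)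
Definition tau (R : realDomainType) (N : nat) (delta eps : R)
  (r c c' : 'I_N -> R) (l m n : int) : R :=
  UP (fun i j : 'I_N => phi delta eps (r i) (c i) (c' i) l m (n + (j : nat)%:Z)).

(* Main.v *)
Require Import Defs.
From mathcomp Require Import all_boot all_order all_algebra all_fingroup.
From mathcomp Require Import zify ring lra.
Import Order.TTheory GRing.Theory Num.Theory.
Local Open Scope ring_scope.
Set Implicit Arguments. Unset Strict Implicit. Unset Printing Implicit Defensive.


Section Tmax.
Variable R : realFieldType.

Definition ismax (T : finType) (f : T -> R) (x : R) :=
  (forall t, f t <= x) /\ exists t, x = f t.

Lemma ismax_uniq (T : finType) (f : T -> R) x y : ismax f x -> ismax f y -> x = y.
Proof.
move=> [h1 [t1 e1]] [h2 [t2 e2]]; apply/le_anti/andP; split.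
  by rewrite e1; apply: h2.
by rewrite e2; apply: h1.
Qed.

Lemma ismax_ext (T : finType) (f g : T -> R) x : f =1 g -> ismax f x -> ismax g x.
Proof.
move=> fg [h [t e]]; split; first by move=> u; rewrite -fg.
by exists t; rewrite -fg.
Qed.

Lemma ismax_pair (T U : finType) (h : T -> U -> R) (g : T -> R) x :
  (forall t, ismax (h t) (g t)) -> ismax g x ->
  ismax (fun p : T * U => h p.1 p.2) x.
Proof.
move=> H [hg [t e]]; split.
  by move=> [a b] /=; have [h1 _] := H a; apply: le_trans (h1 b) (hg a).
have [_ [u eu]] := H t; by exists (t, u); rewrite e eu.
Qed.

Lemma ismax_part (T U : finType) (h : T -> U -> R) (g : U -> R) x :
  (forall u, ismax (fun t => h t u) (g u)) ->
  ismax (fun p : T * U => h p.1 p.2) x -> ismax g x.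
Proof.
move=> H [hx [[t u] e]]; split.
  move=> v; have [_ [t' e']] := H v; rewrite e'; exact: (hx (t', v)).
exists u; apply/le_anti/andP; split.
  by rewrite e /=; have [h1 _] := H u; apply: h1.
have [_ [t' e']] := H u; rewrite e'; exact: (hx (t', u)).
Qed.

Lemma ismax_add (T U : finType) (f : T -> R) (g : U -> R) x y :
  ismax f x -> ismax g y -> ismax (fun p : T * U => f p.1 + g p.2) (x + y).
Proof.
move=> [hf [t et]] [hg [u eu]]; split.
  by move=> [a b] /=; apply: lerD.
by exists (t, u); rewrite et eu.
Qed.

Lemma UP_ismax N (a : 'I_N -> 'I_N -> R) : ismax (upsum a) (UP a).
Proof.
split.
  move=> s; rewrite /UP (bigD1 s) //=; rewrite le_max; by rewrite lexx.
rewrite /UP; apply: (big_ind (fun x => exists t, x = upsum a t)).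
- by exists 1%g.
- move=> x y [t ->] [u ->]; rewrite maxEle; case: ifP => _; by eexists.
- by move=> s _; exists s.
Qed.

Lemma sum_max_ismax N (A B : 'I_N -> R) :
  ismax (fun f : {ffun 'I_N -> bool} => \sum_i (if f i then A i else B i))
        (\sum_i Num.max (A i) (B i)).
Proof.
split.
  move=> f; apply: ler_sum => i _; case: (f i); rewrite le_max lexx ?orbT //.
exists [ffun i => B i <= A i]; apply: eq_bigr => i _; rewrite ffunE.
rewrite maxEle; case: ifPn => h1; case: ifPn => h2 //.
- by apply/le_anti; rewrite h1 h2.
- by move: (le_total (A i) (B i)); rewrite (negbTE h1) (negbTE h2).
Qed.

End Tmax.


Section Kpart.
Variable R : realFieldType.
Variable N : nat.

Definition Kf (w : 'I_N -> R) :=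
  \sum_(i < N) \sum_(j < N) (if (j < i)%N then Num.max (w i) (w j) else 0).

Lemma sym_sum (f : 'I_N -> 'I_N -> R) :
  \sum_(i < N) \sum_(j < N) f i j =
  \sum_(i < N) \sum_(j < N) (if (j < i)%N then f i j + f j i else 0) + \sum_(i < N) f i i.
Proof.
have E : forall i j, f i j = (if (j < i)%N then f i j else 0)
   + (if (i < j)%N then f i j else 0) + (if j == i then f i j else 0).
  move=> i j; case: (ltngtP j i) => h.
  - have -> : (j == i) = false by apply/eqP => e; move: h; rewrite e ltnn.
    by rewrite !addr0.
  - have -> : (j == i) = false by apply/eqP => e; move: h; rewrite e ltnn.
    by rewrite add0r addr0.
  - have e : j = i by apply: val_inj.
    by rewrite e eqxx !add0r.
have E2 : forall i : 'I_N, \sum_(j < N) f i j = \sum_(j < N) (if (j < i)%N then f i j else 0)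
   + \sum_(j < N) (if (i < j)%N then f i j else 0) + f i i.
  move=> i; rewrite -[f i i](@big_pred1_eq R 0 +%R _ i (f i)) big_mkcond -!big_split /=.
  by apply: eq_bigr => j _; exact: E.
rewrite (eq_bigr _ (fun i _ => E2 i)) !big_split /=; congr (_ + _).
rewrite (exchange_big _ _ _ _ _ (fun i j : 'I_N => if (i < j)%N then f i j else 0)) /=.
rewrite -big_split /=; apply: eq_bigr => i _; rewrite -big_split /=.
by apply: eq_bigr => j _; case: ifP; rewrite ?addr0.
Qed.


Lemma sum_lt_minn m k : (\sum_(i < m) (i < k))%N = minn k m.
Proof.
elim: m => [|m IH]; first by rewrite big_ord0 minn0.
rewrite big_ord_recr /= IH; case: ltnP => h; lia.
Qed.

Lemma perm_val (s : 'S_N) i : (s i : nat) = (\sum_(j < N) (s j < s i))%N.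
Proof.
have H := (reindex_inj (F := fun k : 'I_N => (k < s i)%N) (P := xpredT) (op := addn) (x := 0%N) (@perm_inj _ s)).
rewrite /= in H; rewrite -H.
by rewrite sum_lt_minn; apply/esym/minn_idPl/ltnW.
Qed.

Lemma perm_le_Kf (w : 'I_N -> R) (s : 'S_N) : \sum_i w i * (s i)%:R <= Kf w.
Proof.
have -> : \sum_i w i * (s i)%:R = \sum_(i < N) \sum_(j < N) (if (s j < s i)%N then w i else 0).
  apply: eq_bigr => i _; rewrite [in LHS]perm_val natr_sum mulr_sumr; apply: eq_bigr => j _.
  by case: (s j < s i)%N => /=; rewrite ?mulr1n ?mulr1 ?mulr0n ?mulr0.
rewrite sym_sum [X in _ + X]big1 ?addr0; last by move=> i _; rewrite ltnn.
apply: ler_sum => i _; apply: ler_sum => j _; case: ifP => hji //.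
have nij : s j != s i.
  rewrite (inj_eq perm_inj); apply/eqP=> e; move: hji; rewrite e ltnn //.
case: (ltngtP (s j) (s i)) => h.
- by rewrite addr0 le_max lexx.
- by rewrite add0r le_max lexx orbT.
- have e : s j = s i by apply: val_inj.
  by rewrite e eqxx in nij.
Qed.


Definition prec (w : 'I_N -> R) (j i : 'I_N) :=
  (w j < w i) || ((w j == w i) && (j < i)%N).

Lemma prec_irr w i : ~~ prec w i i.
Proof. by rewrite /prec ltxx ltnn andbF. Qed.

Lemma prec_le w j i : prec w j i -> w j <= w i.
Proof. by case/orP => [/ltW //|/andP [/eqP -> _]]. Qed.

Lemma prec_trans w a b c : prec w a b -> prec w b c -> prec w a c.
Proof.
rewrite /prec => /orP [h1|/andP [/eqP e1 h1]] /orP [h2|/andP [/eqP e2 h2]].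
- by rewrite (lt_trans h1 h2).
- by rewrite -e2 h1.
- by rewrite e1 h2.
- by rewrite e1 e2 eqxx (ltn_trans h1 h2) orbT.
Qed.

Lemma prec_total w i j : i != j -> prec w i j || prec w j i.
Proof.
move=> nij; rewrite /prec; case: (ltgtP (w i) (w j)) => //= e.
case: (ltngtP i j) => // h.
by move: nij; rewrite (val_inj h) eqxx.
Qed.

Definition rk w i := #|[pred j | prec w j i]|.

Lemma rk_lt w i : (rk w i < N)%N.
Proof.
have h1 : [pred j | prec w j i] \subset predC1 i.
  apply/subsetP => j; rewrite !inE; apply: contraTneq => ->; exact: prec_irr.
have := subset_leq_card h1; rewrite cardC1 card_ord /rk.
move=> h; apply: (leq_ltn_trans h); rewrite ltn_predL; exact: (leq_ltn_trans (leq0n i) (ltn_ord i)).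
Qed.

Lemma rk_lt_prec w i j : prec w i j -> (rk w i < rk w j)%N.
Proof.
move=> hij; apply: proper_card; apply/properP; split.
  apply/subsetP => k; rewrite !inE => hk; exact: prec_trans hk hij.
by exists i; rewrite !inE // (negbTE (prec_irr w i)).
Qed.

Lemma rk_inj w : injective (fun i => Ordinal (rk_lt w i)).
Proof.
move=> i j /(congr1 val) /= e; apply/eqP; apply/negPn/negP => nij.
case/orP: (prec_total w nij) => /rk_lt_prec; rewrite e ltnn //.
Qed.

Lemma Kf_attained w : exists s : 'S_N, \sum_i w i * (s i)%:R = Kf w.
Proof.
exists (perm (@rk_inj w)).
have -> : \sum_i w i * (perm (@rk_inj w) i)%:R =
   \sum_(i < N) \sum_(j < N) (if prec w j i then w i else 0).
  apply: eq_bigr => i _; rewrite permE /= /rk -sum1_card big_mkcond /= natr_sum mulr_sumr.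
  apply: eq_bigr => j _; rewrite inE.
  by case: (prec w j i) => /=; rewrite ?mulr1n ?mulr1 ?mulr0n ?mulr0.
rewrite sym_sum [X in _ + X]big1 ?addr0; last first.
  by move=> i _; rewrite (negbTE (prec_irr w i)).
apply: eq_bigr => i _; apply: eq_bigr => j _; case: ifP => hji //.
have nji : j != i by apply/eqP => e; move: hji; rewrite e ltnn.
case/orP: (prec_total w nji) => h.
- have h' : ~~ prec w i j by apply/negP => h2; move: (prec_irr w j); rewrite (prec_trans h h2).
  by rewrite h (negbTE h') addr0 max_l // prec_le.
- have h' : ~~ prec w j i by apply/negP => h2; move: (prec_irr w j); rewrite (prec_trans h2 h).
  by rewrite h (negbTE h') add0r max_r // prec_le.
Qed.

Lemma Kf_ismax w : ismax (fun s : 'S_N => \sum_i w i * (s i)%:R) (Kf w).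
Proof.
split; first by move=> s; apply: perm_le_Kf.
by have [s e] := Kf_attained w; exists s.
Qed.

End Kpart.


Section Tau.
Variable R : realFieldType.
Variable N : nat.
Variables (delta eps : R) (r c c' : 'I_N -> R).

Definition pp (u : R) := Num.max 0 (u - delta).
Definition qq (u : R) := Num.max 0 (- u - eps).
Definition uu i (b : bool) := if b then r i else - r i.
Definition CC i (b : bool) := if b then c i else c' i.
Definition base (l m n : int) i b :=
  pp (uu i b) * l%:~R - qq (uu i b) * m%:~R + uu i b * n%:~R + CC i b.
Definition V l m n (s : {ffun 'I_N -> bool}) :=
  \sum_i base l m n i (s i) + Kf (fun i => uu i (s i)).

Lemma phi_max l m n i :
  phi delta eps (r i) (c i) (c' i) l m n = Num.max (base l m n i true) (base l m n i false).
Proof. by rewrite /phi /eta_ /eta' /base /pp /qq /uu /CC /= opprK mulNr. Qed.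

Lemma ismax_addc (T : finType) (f : T -> R) x a :
  ismax f x -> ismax (fun t => a + f t) (a + x).
Proof.
move=> [h [t e]]; split; first by move=> u; rewrite lerD2l.
by exists t; rewrite e.
Qed.

Lemma base_shift l m n i b (k : nat) :
  base l m (n + k%:Z) i b = base l m n i b + uu i b * k%:R.
Proof. rewrite /base intrD /=; ring. Qed.

Lemma tau_ismax l m n : ismax (V l m n) (tau delta eps r c c' l m n).
Proof.
have H1 := UP_ismax (fun i j : 'I_N => phi delta eps (r i) (c i) (c' i) l m (n + (j : nat)%:Z)).
set H := fun (s : 'S_N) (f : {ffun 'I_N -> bool}) => \sum_i base l m (n + (s i : nat)%:Z) i (f i).
have H2 : ismax (fun p : 'S_N * {ffun 'I_N -> bool} => H p.1 p.2) (tau delta eps r c c' l m n).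
  apply: (ismax_pair _ H1) => s.
  have := sum_max_ismax (fun i => base l m (n + (s i : nat)%:Z) i true)
                        (fun i => base l m (n + (s i : nat)%:Z) i false).
  have -> : \sum_i Num.max (base l m (n + (s i : nat)%:Z) i true) (base l m (n + (s i : nat)%:Z) i false)
      = upsum (fun i j : 'I_N => phi delta eps (r i) (c i) (c' i) l m (n + (j : nat)%:Z)) s.
    by rewrite /upsum; apply: eq_bigr => i _; rewrite phi_max.
  apply: ismax_ext => f; rewrite /H; apply: eq_bigr => i _; by case: (f i).
apply: (ismax_part _ H2) => f.
have := ismax_addc (\sum_i base l m n i (f i)) (Kf_ismax (fun i => uu i (f i))).
apply: ismax_ext => s /=; rewrite /H (eq_bigr _ (fun i _ => base_shift l m n i (f i) (s i))).
by rewrite [RHS]big_split.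
Qed.

End Tau.


Section Decomp.
Variable R : realFieldType.
Variable N : nat.
Variables (delta eps : R) (r c c' : 'I_N -> R).

Local Notation uu := (uu r).
Local Notation base := (base delta eps r c c').
Local Notation V := (V delta eps r c c').
Local Notation pp := (pp delta).
Local Notation qq := (qq eps).

Lemma Kf_alt (w : 'I_N -> R) :
  Kf w = \sum_i (\sum_j Num.max (w i) (w j) - w i) / 2.
Proof.
have E := sym_sum (fun i j => Num.max (w i) (w j)); rewrite /= in E.
have E1 : \sum_(i < N) Num.max (w i) (w i) = \sum_i w i.
  by apply: eq_bigr => i _; rewrite maxxx.
have E2 : \sum_(i < N) \sum_(j < N) (if (j < i)%N then Num.max (w i) (w j) + Num.max (w j) (w i) else 0)
   = 2 * Kf w.
  rewrite /Kf mulr_sumr; apply: eq_bigr => i _; rewrite mulr_sumr; apply: eq_bigr => j _.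
  by case: ifP; rewrite ?mulr0 // maxC mulr2n mulrDl mul1r.
rewrite E1 E2 in E.
by rewrite -mulr_suml sumrB E; field.
Qed.

Lemma V_alt l m n s :
  V l m n s = \sum_i (base l m n i (s i) +
     (\sum_j Num.max (uu i (s i)) (uu j (s j)) - uu i (s i)) / 2).
Proof. by rewrite /V Kf_alt [RHS]big_split. Qed.

Lemma maxN_abs (a b : R) : Num.max a b + Num.max (-a) (-b) = `|a - b|.
Proof.
rewrite !maxEle lerN2; case: (lerP a b) => h1; case: (lerP b a) => h2;
  have [h3|h3] := lerP 0 (a - b); rewrite ?ger0_norm ?ltr0_norm //; lra.
Qed.

Definition sp (s t : {ffun 'I_N -> bool}) i := s i != t i.

Lemma uu_split s t i : sp s t i -> uu i (t i) = - uu i (s i).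
Proof. by rewrite /sp /uu; case: (s i); case: (t i); rewrite ?opprK. Qed.

Lemma uu_nsplit s t i : ~~ sp s t i -> uu i (t i) = uu i (s i).
Proof. by rewrite /sp negbK => /eqP ->. Qed.

Definition Rest l m n (s t : {ffun 'I_N -> bool}) :=
  \sum_i (base l m n i (s i) + base l m n i (t i) - (uu i (s i) + uu i (t i)) / 2
     + (if sp s t i then 0 else qq (uu i (s i)) + pp (uu i (s i)))
     + (\sum_j (if sp s t i && sp s t j then 0 else
           Num.max (uu i (s i)) (uu j (s j)) + Num.max (uu i (t i)) (uu j (t j)))) / 2).

Definition Obj (w : R -> R) (I : 'I_N -> bool) (x : 'I_N -> R) :=
  \sum_i ((\sum_j (if I i && I j then `|x i - x j| else 0)) / 2
          + (if I i then w (x i) else 0)).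

Lemma pair_decomp l m n (e1 e2 w : R -> R) (s t : {ffun 'I_N -> bool}) :
  (forall x, e1 x + e2 x = qq x + pp x) ->
  (forall x, e1 x + e2 (- x) = w x) ->
  \sum_i (base l m n i (s i) + e1 (uu i (s i)) +
     (\sum_j Num.max (uu i (s i)) (uu j (s j)) - uu i (s i)) / 2)
  + \sum_i (base l m n i (t i) + e2 (uu i (t i)) +
     (\sum_j Num.max (uu i (t i)) (uu j (t j)) - uu i (t i)) / 2)
  = Rest l m n s t + Obj w (sp s t) (fun i => uu i (s i)).
Proof.
move=> he hw; rewrite /Rest /Obj -!big_split /=; apply: eq_bigr => i _.
set A := \sum_j _; set B := \sum_j _; set C := \sum_j _; set D := \sum_j _.
have hAB : A + B = C + D.
  rewrite /A /B /C /D -!big_split /=; apply: eq_bigr => j _.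
  case: ifP => [/andP [hi hj]|_]; last by rewrite addr0.
  by rewrite (uu_split hi) (uu_split hj) maxN_abs add0r.
case: (boolP (sp s t i)) => hi.
- rewrite (uu_split hi) -hw; lra.
- rewrite (uu_nsplit hi) -he; lra.
Qed.


Lemma base_m l m n i b : base l (m - 1) n i b = base l m n i b + qq (uu i b).
Proof. rewrite /base; have -> : (m - 1)%:~R = m%:~R - 1 :> R by rewrite intrB. ring. Qed.
Lemma base_l l m n i b : base (l + 1) m n i b = base l m n i b + pp (uu i b).
Proof. rewrite /base intrD /=; ring. Qed.
Lemma base_lm l m n i b : base (l + 1) (m - 1) n i b = base l m n i b + (pp (uu i b) + qq (uu i b)).
Proof. rewrite /base !intrD ?intrN /=; ring. Qed.
Lemma base_mn l m n i b : base l (m - 1) (n + 1) i b = base l m n i b + (qq (uu i b) + uu i b).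
Proof. rewrite /base !intrD ?intrN /=; ring. Qed.
Lemma base_ln l m n i b : base (l + 1) m (n - 1) i b = base l m n i b + (pp (uu i b) - uu i b).
Proof. rewrite /base !intrD ?intrN /=; ring. Qed.

Definition wL x := qq x + pp (- x).
Definition wT1 x := pp (- x) + qq (- x).
Definition wT2 x := qq x + pp (- x) + 2 * x.

Lemma D1 l m n (s t : {ffun 'I_N -> bool}) :
  V l (m - 1) n s + V (l + 1) m n t = Rest l m n s t + Obj wL (sp s t) (fun i => uu i (s i)).
Proof.
rewrite !V_alt -(@pair_decomp l m n qq pp wL) //.
by congr (_ + _); apply: eq_bigr => i _; rewrite ?base_m ?base_l.
Qed.

Lemma D2 l m n (s t : {ffun 'I_N -> bool}) :
  V l m n s + V (l + 1) (m - 1) n t = Rest l m n s t + Obj wT1 (sp s t) (fun i => uu i (s i)).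
Proof.
rewrite !V_alt -(@pair_decomp l m n (fun=> 0) (fun x => pp x + qq x) wT1) //; last first.
  by move=> x; rewrite add0r.
  by move=> x; rewrite add0r addrC.
by congr (_ + _); apply: eq_bigr => i _; rewrite ?base_lm ?addr0.
Qed.

Lemma D3 l m n (s t : {ffun 'I_N -> bool}) :
  V l (m - 1) (n + 1) s + V (l + 1) m (n - 1) t = Rest l m n s t + Obj wT2 (sp s t) (fun i => uu i (s i)).
Proof.
rewrite !V_alt -(@pair_decomp l m n (fun x => qq x + x) (fun x => pp x - x) wT2) //; last first.
  by move=> x; rewrite /wT2; ring.
  by move=> x; ring.
by congr (_ + _); apply: eq_bigr => i _; rewrite ?base_mn ?base_ln.
Qed.

End Decomp.


Section Swap.
Variable R : realFieldType.
Variable N : nat.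
Variables (delta eps : R) (r c c' : 'I_N -> R).

Local Notation uu := (uu r).
Local Notation Rest := (Rest delta eps r c c').

Definition swapr (s t s' t' : {ffun 'I_N -> bool}) :=
  forall i, (s' i = s i /\ t' i = t i) \/ (s' i = t i /\ t' i = s i).

Lemma sp_swap s t s' t' : swapr s t s' t' -> sp s' t' =1 sp s t.
Proof. by move=> H i; rewrite /sp; case: (H i) => [[-> ->]|[-> ->]] //; rewrite eq_sym. Qed.

Lemma nsp_eq (s t : {ffun 'I_N -> bool}) i : ~~ sp s t i -> t i = s i.
Proof. by rewrite /sp negbK => /eqP ->. Qed.

Lemma Rest_swap l m n s t s' t' : swapr s t s' t' -> Rest l m n s' t' = Rest l m n s t.
Proof.
move=> H; have Hsp := sp_swap H; rewrite /Rest; apply: eq_bigr => i _.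
have -> : \sum_j (if sp s' t' i && sp s' t' j then 0 else
            Num.max (uu i (s' i)) (uu j (s' j)) + Num.max (uu i (t' i)) (uu j (t' j)))
   = \sum_j (if sp s t i && sp s t j then 0 else
            Num.max (uu i (s i)) (uu j (s j)) + Num.max (uu i (t i)) (uu j (t j))).
  apply: eq_bigr => j _; rewrite !Hsp.
  case: (boolP (sp s t i && sp s t j)) => // hij.
  have [hi|hj] : ~~ sp s t i \/ ~~ sp s t j.
    by move: hij; rewrite negb_and => /orP.
  - have e := nsp_eq hi.
    by case: (H i) => [[-> ->]|[-> ->]]; case: (H j) => [[-> ->]|[-> ->]];
      rewrite ?e // addrC.
  - have e := nsp_eq hj.
    by case: (H i) => [[-> ->]|[-> ->]]; case: (H j) => [[-> ->]|[-> ->]];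
      rewrite ?e // addrC.
rewrite Hsp; case: (H i) => [[-> ->]|[-> ->]] //.
case: (boolP (sp s t i)) => hi.
- by rewrite (addrC (uu i (t i))) (addrC (base _ _ _ _ _ _ _ _ _ (t i))).
- by rewrite (nsp_eq hi).
Qed.
End Swap.


Section Levels.
Variable R : realFieldType.

Definition lvl (b eta D : R) := b * D ^+ 2 / 2 + eta * D / 2.

Lemma int_cases (k : int) : k = 0 \/ (1 <= k%:~R :> R) \/ (k%:~R <= -1 :> R).
Proof.
case: (ltgtP k 0) => h; [right; right| right; left| by left].
- have : k <= -1 by lia.
  by move=> h1; rewrite -(ler_int R) in h1.
- have : 1 <= k by lia.
  by move=> h1; rewrite -(ler_int R) in h1.
Qed.

Lemma lvlL b eta (D0 k : int) : 0 <= b -> 0 <= eta -> eta <= 2 * b ->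
  (D0 = 0 \/ D0 = -1) -> lvl b eta D0%:~R <= lvl b eta (D0 + 2 * k)%:~R.
Proof.
move=> hb he1 he2 hD; rewrite /lvl intrD intrM /=.
case: (int_cases k) => [->|[hk|hk]]; first by rewrite mulr0 addr0.
all: set K := k%:~R in hk *.
- case: hD => -> /=.
  + have h1 : 0 <= K * (2 * b * K + eta) by apply: mulr_ge0; nra.
    nra.
  + have h1 : 0 <= K * (2 * b * (K - 1) + eta) by apply: mulr_ge0; nra.
    nra.
- case: hD => -> /=.
  + have h1 : 0 <= K * (2 * b * K + eta) by apply: mulr_le0; nra.
    nra.
  + have h1 : 0 <= K * (2 * b * (K - 1) + eta) by apply: mulr_le0; nra.
    nra.
Qed.


Lemma lvl1 b be ga (D0 k : int) : 0 <= be -> be <= b -> 0 <= ga -> ga <= b ->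
  (D0 = 0 \/ D0 = -1) -> lvl b (be + ga) D0%:~R <= lvl b (ga - be) (D0 + 2 * k)%:~R.
Proof.
move=> h1 h2 h3 h4 hD; rewrite /lvl intrD intrM /=.
case: (int_cases k) => [->|[hk|hk]].
  by rewrite mulr0 addr0; case: hD => -> /=; nra.
all: set K := k%:~R in hk *.
- case: hD => -> /=.
  + have h5 : 0 <= K * (2 * b * K + ga - be) by apply: mulr_ge0; nra.
    nra.
  + have h5 : 0 <= (K - 1) * (2 * b * K - be) by apply: mulr_ge0; nra.
    have h6 : 0 <= ga * K by apply: mulr_ge0; nra.
    nra.
- case: hD => -> /=.
  + have h5 : 0 <= K * (2 * b * K + ga - be) by apply: mulr_le0; nra.
    nra.
  + have h5 : 0 <= K * (2 * b * (K - 1) + ga) by apply: mulr_le0; nra.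
    have h6 : 0 <= be * (1 - K) by apply: mulr_ge0; nra.
    nra.
Qed.

Lemma lvl2 b eta (D0 k : int) : 0 <= b -> 0 <= eta -> eta <= 2 * b ->
  (D0 = 0 \/ D0 = -1) -> lvl b eta D0%:~R + (eta - 2 * b) <= lvl b (eta - 4 * b) (D0 + 2 * k)%:~R.
Proof.
move=> hb h1 h2 hD; have := lvlL (k - 1) hb h1 h2 hD.
have -> : (D0 + 2 * k)%:~R = (D0 + 2 * (k - 1))%:~R + 2 :> R.
  by rewrite !intrD !intrM intrB /=; ring.
rewrite /lvl; set X := (D0 + 2 * (k - 1))%:~R; nra.
Qed.

Lemma lvl2_eq b eta D : lvl b (eta - 4 * b) (D + 2) = lvl b eta D + (eta - 2 * b).
Proof. by rewrite /lvl; field. Qed.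

End Levels.

Section Lists.
Variable R : realFieldType.
Variable T : eqType.
Variable a : T -> R.

Definition sg (s : T -> bool) i : R := if s i then 1 else -1.
Definition Sint (l : seq T) (s : T -> bool) : int := \sum_(i <- l) (if s i then 1 else -1).
Definition Sl l s : R := (Sint l s)%:~R.
Definition Qd l s := \sum_(i <- l) \sum_(j <- l) sg s i * sg s j * Num.min (a i) (a j).
Definition Lg (g : R -> R) l s := \sum_(i <- l) g (a i) * sg s i.
Definition Pl g t l s := (Qd l s - t * Sl l s ^+ 2) / 2 + (Lg g l s - g t * Sl l s) / 2.
Fixpoint Wk g t l s := match l with [::] => 0
  | z :: l' => lvl (a z - t) (g (a z) - g t) (Sl (z :: l') s) + Wk g (a z) l' s end.
Fixpoint Tel (h : R -> R) t l := match l with [::] => 0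
  | z :: l' => (h (a z) - h t) + Tel h (a z) l' end.
Fixpoint AltP l s : Prop := match l with [::] => True
  | z :: l' => (Sint (z :: l') s = 0 \/ Sint (z :: l') s = -1) /\ AltP l' s end.

Lemma Sint_cons z l s : Sint (z :: l) s = (if s z then 1 else -1) + Sint l s.
Proof. by rewrite /Sint big_cons. Qed.

Lemma Sl_cons z l s : Sl (z :: l) s = sg s z + Sl l s.
Proof. by rewrite /Sl /Sint big_cons intrD /sg; case: (s z). Qed.

Lemma Pl_Wk g t l s : path <=%R t (map a l) -> Pl g t l s = Wk g t l s.
Proof.
elim: l t => [|z l IH] t /=.
  by move=> _; rewrite /Pl /Qd /Lg /Sl /Sint !big_nil /=; field.
move=> /andP [htz hp]; rewrite -(IH _ hp).
have hmin : {in l, forall j, a z <= a j}.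
  move=> j hj; have := order_path_min le_trans hp.
  by move/allP => /(_ (a j)); apply; apply: map_f.
have hQ : Qd (z :: l) s = a z + 2 * sg s z * a z * Sl l s + Qd l s.
  rewrite /Qd.
  have h : forall i, \sum_(j <- z :: l) sg s i * sg s j * Num.min (a i) (a j) =
     sg s i * sg s z * Num.min (a i) (a z) + \sum_(j <- l) sg s i * sg s j * Num.min (a i) (a j).
    by move=> i; rewrite big_cons.
  rewrite big_cons (eq_bigr _ (fun i _ => h i)) big_split /= h.
  have e1 : \sum_(j <- l) sg s z * sg s j * Num.min (a z) (a j) = sg s z * a z * Sl l s.
    rewrite /Sl /Sint rmorph_sum /= mulr_sumr; apply: eq_big_seq => j hj.
    rewrite (min_l (hmin j hj)) /sg; case: (s j) => /=; ring.
  have e2 : \sum_(i <- l) sg s i * sg s z * Num.min (a i) (a z) = sg s z * a z * Sl l s.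
    rewrite /Sl /Sint rmorph_sum /= mulr_sumr; apply: eq_big_seq => j hj.
    rewrite (min_r (hmin j hj)) /sg; case: (s j) => /=; ring.
  rewrite e1 e2 minxx /sg; case: (s z); ring.
have hL : Lg g (z :: l) s = g (a z) * sg s z + Lg g l s by rewrite /Lg big_cons.
by rewrite /Pl hQ hL Sl_cons /lvl /sg; case: (s z); field.
Qed.

Lemma Sint_par l s s' : exists k : int, Sint l s = Sint l s' + 2 * k.
Proof.
elim: l => [|z l [k IH]]; first by exists 0; rewrite /Sint !big_nil.
rewrite /Sint !big_cons -/(Sint l s) -/(Sint l s') IH.
case: (s z); case: (s' z); [exists k | exists (k + 1) | exists (k - 1) | exists k]; lia.
Qed.

Lemma Sint_eq_in l s s' : {in l, s =1 s'} -> Sint l s = Sint l s'.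
Proof. by move=> h; apply: eq_big_seq => i hi; rewrite h. Qed.

Lemma AltP_eq l s s' : {in l, s =1 s'} -> AltP l s -> AltP l s'.
Proof.
elim: l => [//|z l IH] h /= [h1 h2]; split.
  by rewrite -(Sint_eq_in h).
apply: IH => // i hi; apply: h; by rewrite inE hi orbT.
Qed.

Lemma AltP_S l s : AltP l s -> Sint l s = 0 \/ Sint l s = -1.
Proof. by case: l => [_|z l [] //]; left; rewrite /Sint big_nil. Qed.

Lemma alt_exists l : uniq l -> exists s, AltP l s.
Proof.
elim: l => [|z l IH]; first by exists xpredT.
move=> /= /andP [hz hu]; have [s hs] := IH hu.
exists (fun i => if i == z then Sint l s == -1 else s i).
have hs' : AltP l (fun i => if i == z then Sint l s == -1 else s i).
  apply: AltP_eq hs => i hi; have -> : (i == z) = false by apply/eqP => e; move: hz; rewrite -e hi.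
  by [].
split => //.
have e : Sint l (fun i => if i == z then Sint l s == -1 else s i) = Sint l s.
  apply: Sint_eq_in => i hi; have -> : (i == z) = false by apply/eqP => e; move: hz; rewrite -e hi.
  by [].
rewrite Sint_cons e eqxx.
by case: (AltP_S hs) => ->; [right | left].
Qed.

Lemma wk_bound (g1 g2 h : R -> R) :
  (forall u t (D0 k : int), t <= u -> (D0 = 0 \/ D0 = -1) ->
     lvl (u - t) (g2 u - g2 t) D0%:~R + (h u - h t) <= lvl (u - t) (g1 u - g1 t) (D0 + 2 * k)%:~R) ->
  forall l t s s0, path <=%R t (map a l) -> AltP l s0 -> Wk g2 t l s0 + Tel h t l <= Wk g1 t l s.
Proof.
move=> H; elim=> [|z l IH] t s s0 /=; first by rewrite addr0.
move=> /andP [htz hp] [hA hA'].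
have [k hk] := Sint_par (z :: l) s s0.
rewrite /Sl hk.
have := H (a z) t (Sint (z :: l) s0) k htz hA.
have := IH (a z) s s0 hp hA'.
move=> h1 h2; lra.
Qed.

Lemma Tel_last h t l : Tel h t l = h (last t (map a l)) - h t.
Proof.
elim: l t => [|z l IH] t /=; first by rewrite subrr.
by rewrite IH; ring.
Qed.

Fixpoint Suf2 l s s' : Prop := match l with [::] => True
  | z :: l' => Sl (z :: l') s' = Sl (z :: l') s + 2 /\ Suf2 l' s s' end.

Lemma wk_eq (g1 g2 h : R -> R) :
  (forall u t D, lvl (u - t) (g2 u - g2 t) (D + 2) = lvl (u - t) (g1 u - g1 t) D + (h u - h t)) ->
  forall l t s s', Suf2 l s s' -> Wk g2 t l s' = Wk g1 t l s + Tel h t l.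
Proof.
move=> H; elim=> [|z l IH] t s s' /=; first by rewrite addr0.
move=> [h1 h2]; rewrite (IH _ _ _ h2) h1 H; ring.
Qed.

Lemma flip_S l s z : uniq l -> s z = false ->
  Sl l (fun i => if i == z then true else s i) = Sl l s + (if z \in l then 2 else 0).
Proof.
move=> hu hz; elim: l hu => [|x l IH]; first by rewrite /Sl /Sint !big_nil addr0.
move=> /= /andP [hx hu]; rewrite !Sl_cons IH // inE.
case: (eqVneq x z) => [e|ne] /=.
  rewrite e /sg eqxx hz; have -> : (z \in l) = false by apply/negbTE; rewrite -e.
  ring.
by rewrite /sg (negbTE ne) addrA.
Qed.

Lemma flip_Suf2 l x s : uniq (x :: l) -> s (last x l) = false ->
  Suf2 (x :: l) s (fun i => if i == last x l then true else s i).
Proof.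
elim: l x => [|y l IH] x hu hz.
  by split => //; rewrite flip_S // inE eqxx.
split.
  by rewrite flip_S // mem_last.
apply: IH => //; by case/andP: hu.
Qed.

Lemma AltP_last x l s : AltP (x :: l) s -> s (last x l) = false.
Proof.
elim: l x => [|y l IH] x /=.
  move=> [h _]; move: h; rewrite Sint_cons /Sint big_nil addr0.
  by case: (s x) => // h; exfalso; lia.
by move=> [_ h]; apply: IH.
Qed.

Lemma path_last t (l : seq R) : path <=%R t l -> t <= last t l /\ {in l, forall x, x <= last t l}.
Proof.
elim: l t => [|y l IH] t /=; first by split.
move=> /andP [hty hp]; have [h1 h2] := IH y hp; split.
  exact: le_trans hty h1.
by move=> x; rewrite inE => /orP [/eqP ->|hx] //; apply: h2.
Qed.

End Lists.


Arguments sg {R T}.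
Section Core.
Variable R : realFieldType.
Variable N : nat.
Variables (delta eps : R) (a : 'I_N -> R).
Hypothesis hd : 0 < delta.
Hypothesis he : 0 < eps.
Hypothesis ha : forall i, 0 <= a i.

Definition phi1 (x : R) := Num.max 0 (x - eps).
Definition psi1 (x : R) := Num.max 0 (x - delta).
Definition Fg x := phi1 x + psi1 x.
Definition g1 x := psi1 x - phi1 x.
Definition g2 x := Fg x - 4 * x.

Definition P (g : R -> R) (I : 'I_N -> bool) (s : 'I_N -> bool) :=
  (\sum_i \sum_j (if I i && I j then sg s i * sg s j * Num.min (a i) (a j) else 0)) / 2
  + (\sum_i (if I i then g (a i) * sg s i else 0)) / 2.

Lemma maxlip (e t u : R) : t <= u -> 0 <= Num.max 0 (u - e) - Num.max 0 (t - e) <= u - t.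
Proof.
move=> h; rewrite !maxEle; case: ifP => h1; case: ifP => h2; apply/andP; split; lra.
Qed.

Definition lsort (I : 'I_N -> bool) := sort (fun i j => a i <= a j) (filter I (index_enum 'I_N)).

Lemma sum1 (I : 'I_N -> bool) (f : 'I_N -> R) :
  \sum_i (if I i then f i else 0) = \sum_(i <- lsort I) f i.
Proof. by rewrite -big_mkcond -big_filter /lsort; apply: perm_big; rewrite perm_sym perm_sort perm_refl. Qed.

Lemma sum2 (I : 'I_N -> bool) (f : 'I_N -> 'I_N -> R) :
  \sum_i \sum_j (if I i && I j then f i j else 0) = \sum_(i <- lsort I) \sum_(j <- lsort I) f i j.
Proof.
rewrite -sum1; apply: eq_bigr => i _; case: (I i) => /=; first by rewrite sum1.
by rewrite big1.
Qed.

Lemma lsort_uniq I : uniq (lsort I).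
Proof. by rewrite /lsort sort_uniq filter_uniq // index_enum_uniq. Qed.

Lemma lsort_path I : path <=%R 0 (map a (lsort I)).
Proof.
rewrite path_sortedE; last exact: le_trans.
apply/andP; split.
  by apply/allP => x /mapP [i _ ->].
rewrite sorted_map; apply: sort_sorted => i j; exact: le_total.
Qed.

Lemma P_Wk g I s : g 0 = 0 -> P g I s = Wk a g 0 (lsort I) s.
Proof.
move=> g0; rewrite -Pl_Wk ?lsort_path // /P /Pl /Qd /Lg sum1 sum2 g0; ring.
Qed.

Definition h2 x := Fg x - 2 * x.

Lemma Fg0 : Fg 0 = 0.
Proof. by rewrite /Fg /phi1 /psi1 !add0r !max_l ?subrr ?addr0 // oppr_le0 ltW. Qed.
Lemma g10 : g1 0 = 0.
Proof. by rewrite /g1 /phi1 /psi1 !add0r !max_l ?subrr ?addr0 // oppr_le0 ltW. Qed.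
Lemma g20 : g2 0 = 0.
Proof. by rewrite /g2 Fg0 mulr0 subr0. Qed.

Lemma diffs u t : t <= u ->
  [/\ 0 <= phi1 u - phi1 t, phi1 u - phi1 t <= u - t, 0 <= psi1 u - psi1 t & psi1 u - psi1 t <= u - t].
Proof.
move=> h; have /andP [h1 h2] := maxlip eps h; have /andP [h3 h4] := maxlip delta h.
by split.
Qed.

Lemma HF u t (D0 k : int) : t <= u -> (D0 = 0 \/ D0 = -1) ->
  lvl (u - t) (Fg u - Fg t) D0%:~R + ((fun=> 0 : R) u - (fun=> 0 : R) t) <=
  lvl (u - t) (Fg u - Fg t) (D0 + 2 * k)%:~R.
Proof.
move=> h hD; have [h1 h2 h3 h4] := diffs h; rewrite subrr addr0.
by apply: lvlL => //; rewrite /Fg; lra.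
Qed.

Lemma H1 u t (D0 k : int) : t <= u -> (D0 = 0 \/ D0 = -1) ->
  lvl (u - t) (Fg u - Fg t) D0%:~R + ((fun=> 0 : R) u - (fun=> 0 : R) t) <=
  lvl (u - t) (g1 u - g1 t) (D0 + 2 * k)%:~R.
Proof.
move=> h hD; have [h1 h2 h3 h4] := diffs h; rewrite subrr addr0.
have -> : Fg u - Fg t = (phi1 u - phi1 t) + (psi1 u - psi1 t) by rewrite /Fg; ring.
have -> : g1 u - g1 t = (psi1 u - psi1 t) - (phi1 u - phi1 t) by rewrite /g1; ring.
by apply: lvl1.
Qed.

Lemma H2 u t (D0 k : int) : t <= u -> (D0 = 0 \/ D0 = -1) ->
  lvl (u - t) (Fg u - Fg t) D0%:~R + (h2 u - h2 t) <=
  lvl (u - t) (g2 u - g2 t) (D0 + 2 * k)%:~R.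
Proof.
move=> h hD; have [k1 k2 k3 k4] := diffs h.
have -> : h2 u - h2 t = (Fg u - Fg t) - 2 * (u - t) by rewrite /h2; ring.
have -> : g2 u - g2 t = (Fg u - Fg t) - 4 * (u - t) by rewrite /g2; ring.
by apply: lvl2 => //; rewrite /Fg; lra.
Qed.

Lemma core I : exists s0,
  [/\ (forall s, P Fg I s0 <= P g1 I s),
      (forall s, P Fg I s0 <= P g2 I s + delta + eps),
      (forall s, P Fg I s0 <= P Fg I s) &
      exists s', P g1 I s' <= P Fg I s0 \/ P g2 I s' + delta + eps <= P Fg I s0].
Proof.
have [s0 hA] := alt_exists (lsort_uniq I).
exists s0; split.
- move=> s; rewrite !P_Wk ?Fg0 ?g10 //.
  have := wk_bound H1 s (lsort_path I) hA.
  by rewrite Tel_last subrr addr0.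
- move=> s; rewrite !P_Wk ?Fg0 ?g20 //.
  have := wk_bound H2 s (lsort_path I) hA.
  rewrite Tel_last; set M := last 0 _.
  have [hM _] := path_last (lsort_path I).
  have hm1 : M - eps <= phi1 M by rewrite /phi1 le_max lexx orbT.
  have hm2 : M - delta <= psi1 M by rewrite /psi1 le_max lexx orbT.
  rewrite /h2 Fg0 mulr0 subr0 /Fg -/M; lra.
- move=> s; rewrite !P_Wk ?Fg0 //.
  have := wk_bound HF s (lsort_path I) hA.
  by rewrite Tel_last subrr addr0.
case: (boolP [forall i, I i ==> (a i <= eps)]) => hE.
  exists s0; left; suff -> : P g1 I s0 = P Fg I s0 by [].
  rewrite /P; congr (_ + _); congr (_ / 2); apply: eq_bigr => i _.
  case hi: (I i) => //; move/forallP: hE => /(_ i); rewrite hi /= => hai.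
  rewrite /g1 /Fg; have -> : phi1 (a i) = 0 by rewrite /phi1 max_l // subr_le0.
  by rewrite subr0 add0r.
case: (boolP [forall i, I i ==> (a i <= delta)]) => hD.
  exists (fun i => ~~ s0 i); left; suff -> : P g1 I (fun i => ~~ s0 i) = P Fg I s0 by [].
  rewrite /P; congr (_ / 2 + _ / 2); apply: eq_bigr => i _.
    apply: eq_bigr => j _; case: (I i && I j) => //.
    by rewrite /sg; case: (s0 i); case: (s0 j) => /=; ring.
  case hi: (I i) => //; move/forallP: hD => /(_ i); rewrite hi /= => hai.
  rewrite /g1 /Fg; have -> : psi1 (a i) = 0 by rewrite /psi1 max_l // subr_le0.
  by rewrite /sg; case: (s0 i) => /=; ring.
move/forallPn: hE => [i]; rewrite negb_imply => /andP [hi]; rewrite -ltNge => hi2.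
move/forallPn: hD => [j]; rewrite negb_imply => /andP [hj]; rewrite -ltNge => hj2.
have hP := lsort_path I; have hU := lsort_uniq I.
have hin : forall k, I k -> k \in lsort I.
  by move=> k hk; rewrite /lsort mem_sort mem_filter hk mem_index_enum.
have hi' := hin i hi; have hj' := hin j hj.
exists (fun k => if k == last i (lsort I) then true else s0 k); right.
rewrite !P_Wk ?Fg0 ?g20 //.
move: hP hU hA hi' hj'; case: (lsort I) => [|x l'] hP hU hA hi' hj'; first by rewrite in_nil in hi'.
have hS := flip_Suf2 R hU (AltP_last hA).
have Hq : forall u t D, lvl (u - t) (g2 u - g2 t) (D + 2) = lvl (u - t) (Fg u - Fg t) D + (h2 u - h2 t).
  move=> u t D; rewrite /g2 /h2.
  have -> : Fg u - 4 * u - (Fg t - 4 * t) = (Fg u - Fg t) - 4 * (u - t) by ring.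
  rewrite lvl2_eq; congr (_ + _); ring.
rewrite (wk_eq a Hq 0 hS) Tel_last.
have [_ hmax] := path_last hP.
set M := last 0 _ in hmax *.
have hMi : a i <= M by apply: hmax; rewrite map_f.
have hMj : a j <= M by apply: hmax; rewrite map_f.
have e1 : phi1 M = M - eps by rewrite /phi1 max_r // subr_ge0; apply: le_trans (ltW hi2) hMi.
have e2 : psi1 M = M - delta by rewrite /psi1 max_r // subr_ge0; apply: le_trans (ltW hj2) hMj.
rewrite /h2 Fg0 mulr0 subr0 /Fg e1 e2; lra.
Qed.

End Core.

Arguments sg {R T}.

Section Final.
Variable R : realFieldType.
Variable N : nat.
Variables (delta eps : R) (r c c' : 'I_N -> R).
Hypothesis hd : 0 < delta.
Hypothesis he : 0 < eps.

Definition aa i := `|r i|.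
Definition xs (z : 'I_N -> bool) i := sg z i * aa i.

Definition Cc (I : 'I_N -> bool) :=
  (\sum_i \sum_j (if I i && I j then aa i + aa j - Num.min (aa i) (aa j) else 0)) / 2
  + (\sum_i (if I i then Fg delta eps (aa i) else 0)) / 2.

Lemma norm_cases (v : R) : (`|v| = v /\ 0 <= v) \/ (`|v| = - v /\ v < 0).
Proof. by case: (lerP 0 v) => h; [left; rewrite ger0_norm | right; rewrite ltr0_norm]. Qed.

Lemma abs_sg (b1 b2 : bool) (x y : R) : 0 <= x -> 0 <= y ->
  `|(if b1 then 1 else -1) * x - (if b2 then 1 else -1) * y| =
   x + y - Num.min x y - (if b1 then 1 else -1) * (if b2 then 1 else -1) * Num.min x y.
Proof.
move=> hx hy; move: (norm_cases ((if b1 then 1 else -1) * x - (if b2 then 1 else -1) * y)).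
rewrite minEle; case: b1; case: b2; case: (lerP x y) => h /= [[-> h3]|[-> h3]]; lra.
Qed.

Lemma Obj_P (w g : R -> R) I z :
  (forall x, 0 <= x -> w x = Fg delta eps x / 2 - g x / 2 /\ w (- x) = Fg delta eps x / 2 + g x / 2) ->
  Obj w I (xs z) = Cc I - P aa g I z.
Proof.
move=> hw.
have -> : Cc I - P aa g I z = \sum_i
   ((\sum_j (if I i && I j then aa i + aa j - Num.min (aa i) (aa j) else 0)) / 2
     + (if I i then Fg delta eps (aa i) else 0) / 2
     - ((\sum_j (if I i && I j then sg z i * sg z j * Num.min (aa i) (aa j) else 0)) / 2
        + (if I i then g (aa i) * sg z i else 0) / 2)).
  by rewrite sumrB !big_split /= -!mulr_suml.
rewrite /Obj; apply: eq_bigr => i _.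
have -> : \sum_j (if I i && I j then `|xs z i - xs z j| else 0) =
   \sum_j (if I i && I j then aa i + aa j - Num.min (aa i) (aa j) else 0)
   - \sum_j (if I i && I j then sg z i * sg z j * Num.min (aa i) (aa j) else 0).
  rewrite -sumrB; apply: eq_bigr => j _; case: (I i && I j); last by rewrite subr0.
  by rewrite /xs /sg abs_sg // normr_ge0.
case: (I i) => /=; last by rewrite !big1_eq !mul0r; lra.
have [e1 e2] := hw (aa i) (normr_ge0 _).
rewrite /xs /sg; case: (z i); rewrite ?mul1r ?mulN1r ?e1 ?e2 ?mulr1 ?mulrN1; lra.
Qed.

Lemma max0l (v : R) : v <= 0 -> Num.max 0 v = 0.
Proof. by move=> h; rewrite max_l. Qed.

Lemma hwL (x : R) : 0 <= x -> wL delta eps x = Fg delta eps x / 2 - Fg delta eps x / 2 /\ wL delta eps (- x) = Fg delta eps x / 2 + Fg delta eps x / 2.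
Proof.
move=> hx; rewrite /wL /qq /pp /Fg /phi1 /psi1 !opprK.
have z1 : Num.max 0 (- x - delta) = 0 by rewrite max_l //; have := hd; have := he; lra.
have z2 : Num.max 0 (- x - eps) = 0 by rewrite max_l //; have := hd; have := he; lra.
rewrite z1 z2.
by split; field.
Qed.

Lemma hwT1 (x : R) : 0 <= x -> wT1 delta eps x = Fg delta eps x / 2 - g1 delta eps x / 2 /\ wT1 delta eps (- x) = Fg delta eps x / 2 + g1 delta eps x / 2.
Proof.
move=> hx; rewrite /wT1 /qq /pp /Fg /g1 /phi1 /psi1 !opprK.
have z1 : Num.max 0 (- x - delta) = 0 by rewrite max_l //; have := hd; have := he; lra.
have z2 : Num.max 0 (- x - eps) = 0 by rewrite max_l //; have := hd; have := he; lra.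
rewrite z1 z2.
by split; field.
Qed.

Lemma hwT2 (x : R) : 0 <= x -> wT2 delta eps x = Fg delta eps x / 2 - g2 delta eps x / 2 /\ wT2 delta eps (- x) = Fg delta eps x / 2 + g2 delta eps x / 2.
Proof.
move=> hx; rewrite /wT2 /qq /pp /g2 /Fg /phi1 /psi1 !opprK.
have z1 : Num.max 0 (- x - delta) = 0 by rewrite max_l //; have := hd; have := he; lra.
have z2 : Num.max 0 (- x - eps) = 0 by rewrite max_l //; have := hd; have := he; lra.
rewrite z1 z2.
by split; field.
Qed.

Lemma Obj_ext (w : R -> R) (I I' : 'I_N -> bool) (x x' : 'I_N -> R) : I =1 I' -> (forall i, I i -> x i = x' i) ->
  Obj w I x = Obj w I' x'.
Proof.
move=> hI hx; rewrite /Obj; apply: eq_bigr => i _; rewrite -!hI.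
case hi: (I i) => /=; last by [].
congr (_ / 2 + _); last by rewrite hx.
apply: eq_bigr => j _; rewrite -hI; case hj: (I j) => //; by rewrite !hx.
Qed.

Definition sgn (s : {ffun 'I_N -> bool}) i := 0 <= uu r i (s i).

Lemma uu_xs (s : {ffun 'I_N -> bool}) i : uu r i (s i) = xs (sgn s) i.
Proof.
rewrite /xs /sg /sgn /aa /uu; case: (s i) => /=; case: (lerP 0 _) => h';
  move: (norm_cases (r i)) => [[-> h]|[-> h]]; lra.
Qed.

Definition rs (s t : {ffun 'I_N -> bool}) (z : 'I_N -> bool) : {ffun 'I_N -> bool} :=
  [ffun i => if sp s t i then (if 0 <= r i then z i else ~~ z i) else s i].
Definition rt (s t : {ffun 'I_N -> bool}) (z : 'I_N -> bool) : {ffun 'I_N -> bool} :=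
  [ffun i => if sp s t i then ~~ (if 0 <= r i then z i else ~~ z i) else t i].

Lemma rs_swap s t z : swapr s t (rs s t z) (rt s t z).
Proof.
move=> i; rewrite /rs /rt !ffunE /sp.
case: (s i); case: (t i); case: (0 <= r i); case: (z i) => /=; by [left | right].
Qed.

Lemma rs_uu s t z i : sp s t i -> uu r i (rs s t z i) = xs z i.
Proof.
move=> h; rewrite /rs ffunE h /xs /sg /aa /uu.
case: (lerP 0 (r i)) => hr; case: (z i) => /=;
  move: (norm_cases (r i)) => [[-> h1]|[-> h1]]; lra.
Qed.

Lemma Obj_cur (w g : R -> R) (s t : {ffun 'I_N -> bool}) : (forall x, 0 <= x -> w x = Fg delta eps x / 2 - g x / 2 /\ w (- x) = Fg delta eps x / 2 + g x / 2) ->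
  Obj w (sp s t) (fun i => uu r i (s i)) = Cc (sp s t) - P aa g (sp s t) (sgn s).
Proof.
move=> hw; rewrite -(Obj_P (sp s t) (sgn s) hw); apply: Obj_ext => // i _; exact: uu_xs.
Qed.

Lemma Obj_rs (w g : R -> R) (s t : {ffun 'I_N -> bool}) (z : 'I_N -> bool) : (forall x, 0 <= x -> w x = Fg delta eps x / 2 - g x / 2 /\ w (- x) = Fg delta eps x / 2 + g x / 2) ->
  Obj w (sp (rs s t z) (rt s t z)) (fun i => uu r i (rs s t z i)) = Cc (sp s t) - P aa g (sp s t) z.
Proof.
move=> hw; rewrite -(Obj_P (sp s t) z hw); apply: Obj_ext; first exact: sp_swap (rs_swap s t z).
by move=> i; rewrite (sp_swap (rs_swap s t z)); apply: rs_uu.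
Qed.

Lemma main_eq l m n :
  tau delta eps r c c' l (m - 1) n + tau delta eps r c c' (l + 1) m n =
  Num.max (tau delta eps r c c' l m n + tau delta eps r c c' (l + 1) (m - 1) n)
          (tau delta eps r c c' l (m - 1) (n + 1)
           + tau delta eps r c c' (l + 1) m (n - 1) - delta - eps).
Proof.
have [hX1 hX2] := ismax_add (tau_ismax delta eps r c c' l (m - 1) n) (tau_ismax delta eps r c c' (l + 1) m n).
have [hY1 hY2] := ismax_add (tau_ismax delta eps r c c' l m n) (tau_ismax delta eps r c c' (l + 1) (m - 1) n).
have [hZ1 hZ2] := ismax_add (tau_ismax delta eps r c c' l (m - 1) (n + 1)) (tau_ismax delta eps r c c' (l + 1) m (n - 1)).
have ha : forall i, 0 <= aa i by move=> i; exact: normr_ge0.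
have kL : forall s t, V delta eps r c c' l (m - 1) n s + V delta eps r c c' (l + 1) m n t =
   Rest delta eps r c c' l m n s t + (Cc (sp s t) - P aa (Fg delta eps) (sp s t) (sgn s)).
  by move=> s t; rewrite D1 (Obj_cur s t hwL).
have kL' : forall s t z, V delta eps r c c' l (m - 1) n (rs s t z) + V delta eps r c c' (l + 1) m n (rt s t z) =
   Rest delta eps r c c' l m n s t + (Cc (sp s t) - P aa (Fg delta eps) (sp s t) z).
  by move=> s t z; rewrite D1 (Rest_swap _ _ _ _ _ _ _ _ (rs_swap s t z)) (Obj_rs s t z hwL).
have k1 : forall s t, V delta eps r c c' l m n s + V delta eps r c c' (l + 1) (m - 1) n t =
   Rest delta eps r c c' l m n s t + (Cc (sp s t) - P aa (g1 delta eps) (sp s t) (sgn s)).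
  by move=> s t; rewrite D2 (Obj_cur s t hwT1).
have k1' : forall s t z, V delta eps r c c' l m n (rs s t z) + V delta eps r c c' (l + 1) (m - 1) n (rt s t z) =
   Rest delta eps r c c' l m n s t + (Cc (sp s t) - P aa (g1 delta eps) (sp s t) z).
  by move=> s t z; rewrite D2 (Rest_swap _ _ _ _ _ _ _ _ (rs_swap s t z)) (Obj_rs s t z hwT1).
have k2 : forall s t, V delta eps r c c' l (m - 1) (n + 1) s + V delta eps r c c' (l + 1) m (n - 1) t =
   Rest delta eps r c c' l m n s t + (Cc (sp s t) - P aa (g2 delta eps) (sp s t) (sgn s)).
  by move=> s t; rewrite D3 (Obj_cur s t hwT2).
have k2' : forall s t z, V delta eps r c c' l (m - 1) (n + 1) (rs s t z) + V delta eps r c c' (l + 1) m (n - 1) (rt s t z) =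
   Rest delta eps r c c' l m n s t + (Cc (sp s t) - P aa (g2 delta eps) (sp s t) z).
  by move=> s t z; rewrite D3 (Rest_swap _ _ _ _ _ _ _ _ (rs_swap s t z)) (Obj_rs s t z hwT2).
apply/le_anti/andP; split.
- have [[s t] ->] := hX2; rewrite /= kL.
  have [s0 [c1 c2 c3 [s' [h|h]]]] := core hd he ha (sp s t).
  + have := hY1 (rs s t s', rt s t s'); rewrite /= k1' => h2.
    rewrite le_max; apply/orP; left; have := c3 (sgn s); lra.
  + have := hZ1 (rs s t s', rt s t s'); rewrite /= k2' => h2.
    rewrite le_max; apply/orP; right; have := c3 (sgn s); lra.
- rewrite ge_max; apply/andP; split.
  + have [[s t] ->] := hY2; rewrite /= k1.
    have [s0 [c1 c2 c3 c4]] := core hd he ha (sp s t).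
    have := hX1 (rs s t s0, rt s t s0); rewrite /= kL' => h2.
    have := c1 (sgn s); lra.
  + have [[s t] ->] := hZ2; rewrite /= k2.
    have [s0 [c1 c2 c3 c4]] := core hd he ha (sp s t).
    have := hX1 (rs s t s0, rt s t s0); rewrite /= kL' => h2.
    have := c2 (sgn s); lra.
Qed.

End Final.


Theorem theorem3 (R : realFieldType) (N : nat) (hN : (1 <= N)%N)
  (delta eps : R) (hdelta : 0 < delta) (heps : 0 < eps)
  (r c c' : 'I_N -> R) (l m n : int) :
  tau delta eps r c c' l (m - 1) n + tau delta eps r c c' (l + 1) m n =
  Num.max (tau delta eps r c c' l m n + tau delta eps r c c' (l + 1) (m - 1) n)
          (tau delta eps r c c' l (m - 1) (n + 1)
           + tau delta eps r c c' (l + 1) m (n - 1) - delta - eps).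
Proof. exact: (main_eq r c c' hdelta heps l m n). Qed.
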